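(* Let $\epsilon\in(0,1)$ and $0<h\le2\epsilon^2$. Then there exists an initial value $u_0$ with $|u_0|>1$ such that the sequence $(u_n)_{n\ge0}$ starting at $u_0$ and satisfying the implicit midpoint scheme $$\frac{u_n-u_{n-1}}{h}+\frac{1}{\epsilon^2}f\!\left(\frac{u_n+u_{n-1}}{2}\right)=0,\qquad n\ge1,\quad f(u)=u^3-u,$$ converges to an incorrect steady state, i.e. $\lim_{n\to\infty}u_n\ne\mathrm{sign}(u_0)$.
   Context: The scheme discretizes the ODE $u'(t)+\frac{1}{\epsilon^2}(u^3-u)=0$, $u(0)=u_0$, whose solutions converge to $\mathrm{sign}(u_0)$. For $h\le2\epsilon^2$ each step equation has a unique real solution $u_n$, so the sequence is uniquely determined. *)

(* Defs.v *)
From Stdlib Require Import Reals.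
Open Scope R_scope.

Definition f (u : R) : R := u ^ 3 - u.

Definition sign (x : R) : R :=
  if Rlt_dec 0 x then 1 else if Rlt_dec x 0 then -1 else 0.

(* u satisfies the implicit midpoint scheme with step h, parameter eps,
   for all n >= 1 (written with index n+1) *)
Definition midpoint_scheme (eps h : R) (u : nat -> R) : Prop :=
  forall n : nat,
    (u (S n) - u n) / h + / (eps ^ 2) * f ((u (S n) + u n) / 2) = 0.

(* Main.v *)
From Stdlib Require Import Reals Lra Psatz.
Require Import Defs.
Open Scope R_scope.

Lemma sq0 (a : R) : a ^ 2 = 0 -> a = 0.
Proof. intro H. assert (a * a = 0) by (rewrite <- H; ring).
  destruct (Rmult_integral _ _ H0); lra. Qed.

Lemma step_unique (eps h c x y : R) :
  0 < eps -> 0 < h <= 2 * eps ^ 2 ->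
  (x - c) / h + / (eps ^ 2) * f ((x + c) / 2) = 0 ->
  (y - c) / h + / (eps ^ 2) * f ((y + c) / 2) = 0 -> x = y.
Proof.
  intros He [Hh1 Hh2] Ex Ey.
  assert (He2 : 0 < eps ^ 2) by (apply pow_lt; lra).
  unfold f in *.
  set (m1 := (x + c) / 2) in *. set (m2 := (y + c) / 2) in *.
  assert (Hx : (x - c) * eps ^ 2 + h * (m1 ^ 3 - m1) = 0).
  { apply (Rmult_eq_reg_r (/ h * / eps ^ 2)); [|apply Rmult_integral_contrapositive; split; apply Rinv_neq_0_compat; lra].
    rewrite Rmult_0_l, <- Ex. field. lra. }
  assert (Hy : (y - c) * eps ^ 2 + h * (m2 ^ 3 - m2) = 0).
  { apply (Rmult_eq_reg_r (/ h * / eps ^ 2)); [|apply Rmult_integral_contrapositive; split; apply Rinv_neq_0_compat; lra].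
    rewrite Rmult_0_l, <- Ey. field. lra. }
  assert (Hd : (x - y) * (2 * eps ^ 2 - h + h * (m1^2 + m1*m2 + m2^2)) = 0).
  { assert (E : x - y = 2 * (m1 - m2)) by (unfold m1, m2; field).
    rewrite E.
    replace (2 * (m1 - m2) * (2 * eps ^ 2 - h + h * (m1 ^ 2 + m1 * m2 + m2 ^ 2)))
      with (2 * ((x - y) * eps ^ 2 + h * (m1 ^ 3 - m1) - h * (m2 ^ 3 - m2))) by (rewrite E; ring).
    assert (E2 : (x - c) * eps ^ 2 - (y - c) * eps ^ 2 = (x - y) * eps ^ 2) by ring.
    lra. }
  destruct (Rmult_integral _ _ Hd) as [H|H]; [lra|].
  assert (Q : 0 <= m1^2 + m1*m2 + m2^2) by nra.
  assert (Q0 : h * (m1^2 + m1*m2 + m2^2) = 0) by nra.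
  assert (Q1 : m1^2 + m1*m2 + m2^2 = 0).
  { destruct (Rmult_integral _ _ Q0); lra. }
  assert (S1 : 0 <= (2*m1+m2)^2) by (apply pow2_ge_0).
  assert (S2 : 0 <= m2^2) by (apply pow2_ge_0).
  assert (S3 : m2^2 = 0) by (assert (4*(m1^2 + m1*m2 + m2^2) = (2*m1+m2)^2 + 3*m2^2) by ring; lra).
  assert (S4 : (2*m1+m2)^2 = 0) by (assert (4*(m1^2 + m1*m2 + m2^2) = (2*m1+m2)^2 + 3*m2^2) by ring; lra).
  assert (m2 = 0) by (apply sq0; exact S3).
  assert (2*m1+m2 = 0) by (apply sq0; exact S4).
  assert (m1 = 0) by lra.
  unfold m1, m2 in *. lra.
Qed.

Theorem lemma3p6 (eps h : R) :
  0 < eps < 1 -> 0 < h <= 2 * eps ^ 2 ->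
  exists u0 : R, 1 < Rabs u0 /\
    (exists u : nat -> R, u 0%nat = u0 /\ midpoint_scheme eps h u) /\
    (forall u : nat -> R, u 0%nat = u0 -> midpoint_scheme eps h u ->
       exists L : R, Un_cv u L /\ L <> sign u0).
Proof.
  intros He Hh.
  assert (He2 : 0 < eps ^ 2) by (apply pow_lt; lra).
  set (k := 2 * eps ^ 2 / h).
  assert (Hk : 0 < k) by (unfold k; apply Rdiv_lt_0_compat; lra).
  set (v := sqrt (1 + k)).
  assert (Hv2 : v * v = 1 + k) by (unfold v; apply sqrt_sqrt; lra).
  assert (Hv : 0 <= v) by (unfold v; apply sqrt_pos).
  assert (Hv1 : 1 < v) by nra.
  set (u0 := 2 * v).
  assert (Step0 : (0 - u0) / h + / (eps ^ 2) * f ((0 + u0) / 2) = 0).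
  { unfold f, u0. replace ((0 + 2 * v) / 2) with v by field.
    replace (v ^ 3 - v) with (v * (v * v - 1)) by ring. rewrite Hv2.
    unfold k. field. lra. }
  assert (StepZ : (0 - 0) / h + / (eps ^ 2) * f ((0 + 0) / 2) = 0).
  { unfold f. field. lra. }
  exists u0. split; [|split].
  - rewrite Rabs_right; unfold u0; lra.
  - exists (fun n => match n with O => u0 | S _ => 0 end). split; [reflexivity|].
    intros [|n]; simpl; assumption.
  - intros u Hu0 Hs.
    assert (Hz : forall n, u (S n) = 0).
    { induction n.
      - apply (step_unique eps h u0 (u 1%nat) 0); [lra|lra|pose proof (Hs 0%nat) as HH; rewrite Hu0 in HH; exact HH|exact Step0].
      - apply (step_unique eps h 0 (u (S (S n))) 0); [lra|lra|pose proof (Hs (S n)) as HH; rewrite IHn in HH; exact HH|exact StepZ]. }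
    exists 0. split.
    + intros e He'. exists 1%nat. intros n Hn. destruct n; [lia|].
      rewrite Hz. unfold R_dist. rewrite Rminus_0_r, Rabs_R0. lra.
    + unfold sign. destruct (Rlt_dec 0 u0); [lra|]. unfold u0 in n; lra.
Qed.
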